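(* Let $T_1\subseteq T_2\subseteq\cdots$ be well ordered sets, each $T_n$ carrying the restriction of the order of $T_{n+1}$, all having the same minimum and the same maximum. Let $T=\bigcup_n T_n$ with the induced linear order and let $\bar T$ be its completion. Define $d:\bar T\times\bar T\to[0,+\infty)$ by $d(x,x)=0$, $d(x,y)=d(y,x)=\dfrac{1}{\min\{n: \,]x,y]\cap T_n\neq\emptyset\}}$ for $x<y$. Then $d$ is a well-defined metric on $\bar T$; it is a Reznichenko metric, i.e. for any distinct $x,y\in\bar T$ there are neighborhoods $U\ni x$, $V\ni y$ with $\inf\{d(u,v):u\in U,v\in V\}>0$; and $d$ fragments $\bar T$ (with the order topology).
   Context: The completion of a linearly ordered set $T$ is the unique linearly ordered set $\bar T\supseteq T$ (extending the order of $T$) such that $\bar T$ is compact in its order topology and $]x,y]\cap T\neq\emptyset$ for all $x<y$ in $\bar T$, where $]x,y]=\{z:x<z\le y\}$. A map $d$ fragments a topological space $K$ if for every nonempty closed $L\subseteq K$ and every $\varepsilon>0$ there is a nonempty relatively open $U\subseteq L$ with $\sup\{d(x,y):x,y\in U\}<\varepsilon$. *)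

(* Defs.v *)
From Stdlib Require Import Reals List.
Open Scope R_scope.

Section Defs.
Variable X : Type.
Variable lt : X -> X -> Prop.

Definition le (x y : X) : Prop := lt x y \/ x = y.

Definition strict_linear_order : Prop :=
  (forall x, ~ lt x x) /\
  (forall x y z, lt x y -> lt y z -> lt x z) /\
  (forall x y, lt x y \/ x = y \/ lt y x).

Definition well_ordered_subset (S : X -> Prop) : Prop :=
  forall A : X -> Prop, (forall z, A z -> S z) -> (exists z, A z) ->
    exists m, A m /\ forall z, A z -> le m z.

(* basic open sets of the order topology: intervals with optional endpoints
   (None = unbounded): (a,b), (a,->), (<-,b), and the whole space *)
Definition ointerval (oa ob : option X) (z : X) : Prop :=
  match oa with None => True | Some a => lt a z end /\
  match ob with None => True | Some b => lt z b end.

Definition order_open (U : X -> Prop) : Prop :=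
  forall x, U x -> exists oa ob, ointerval oa ob x /\
    forall z, ointerval oa ob z -> U z.

Definition order_closed (L : X -> Prop) : Prop :=
  order_open (fun x => ~ L x).

Definition order_compact : Prop :=
  forall (I : Type) (U : I -> X -> Prop),
    (forall i, order_open (U i)) ->
    (forall x, exists i, U i x) ->
    exists l : list I, forall x, exists i, In i l /\ U i x.

Definition rel_open (L U : X -> Prop) : Prop :=
  exists O, order_open O /\ forall x, U x <-> (L x /\ O x).

Definition hits (S : X -> Prop) (x y : X) : Prop :=
  exists z, S z /\ lt x z /\ le z y.

Definition is_metric (d : X -> X -> R) : Prop :=
  (forall x y, 0 <= d x y) /\
  (forall x y, d x y = 0 <-> x = y) /\
  (forall x y, d x y = d y x) /\
  (forall x y z, d x z <= d x y + d y z).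

Definition reznichenko (d : X -> X -> R) : Prop :=
  forall x y, x <> y ->
    exists U V, order_open U /\ order_open V /\ U x /\ V y /\
      exists eps, 0 < eps /\ forall u v, U u -> V v -> eps <= d u v.

(* sup of d over U x U is < eps  <=>  bounded by some eps' < eps *)
Definition fragments (d : X -> X -> R) : Prop :=
  forall L : X -> Prop, order_closed L -> (exists x, L x) ->
  forall eps, 0 < eps ->
    exists U, rel_open L U /\ (exists x, U x) /\
      exists eps', eps' < eps /\ forall x y, U x -> U y -> d x y <= eps'.
End Defs.

Arguments le {X}.
Arguments strict_linear_order {X}.
Arguments well_ordered_subset {X}.
Arguments order_open {X}.
Arguments order_closed {X}.
Arguments order_compact {X}.
Arguments rel_open {X}.
Arguments hits {X}.
Arguments is_metric {X}.
Arguments reznichenko {X}.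
Arguments fragments {X}.

Definition least_hit {X : Type} (lt : X -> X -> Prop) (T : nat -> X -> Prop)
  (x y : X) (n : nat) : Prop :=
  (1 <= n)%nat /\ hits lt (T n) x y /\
  forall m, (1 <= m)%nat -> hits lt (T m) x y -> (n <= m)%nat.

Definition d_spec {X : Type} (lt : X -> X -> Prop) (T : nat -> X -> Prop)
  (d : X -> X -> R) : Prop :=
  (forall x, d x x = 0) /\
  (forall x y, lt x y -> exists n, least_hit lt T x y n /\
     d x y = / INR n /\ d y x = / INR n).

(* Main.v *)
Require Import Defs.
From Stdlib Require Import Reals List Lra Lia Arith Classical ClassicalEpsilon.
Open Scope R_scope.

Lemma least_nat (P : nat -> Prop) :
  (exists n, P n) -> exists n, P n /\ forall m, P m -> (n <= m)%nat.
Proof.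
  intros [n Hn].
  destruct (classic (exists n, P n /\ forall m, P m -> (n <= m)%nat)) as [H|H]; auto.
  exfalso.
  assert (H0 : forall k j, (j <= k)%nat -> ~ P j).
  { induction k; intros j Hj Pj.
    - apply H; exists j; split; auto; intros; lia.
    - apply H; exists j; split; auto; intros m Pm.
      destruct (le_lt_dec j m); auto. exfalso; apply (IHk m); [lia|auto]. }
  apply (H0 n n); auto.
Qed.

Lemma oi_open {X} (lt : X -> X -> Prop) oa ob : order_open lt (ointerval X lt oa ob).
Proof. intros x Hx; exists oa, ob; split; auto. Qed.

Theorem mainTheorem10 (Tb : Type) (lt : Tb -> Tb -> Prop) (T : nat -> Tb -> Prop)
  (Hlin : strict_linear_order lt)
  (Hwo : forall n, (1 <= n)%nat -> well_ordered_subset lt (T n))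
  (Hmono : forall n, (1 <= n)%nat -> forall z, T n z -> T (S n) z)
  (Hminmax : exists m M, forall n, (1 <= n)%nat ->
      T n m /\ T n M /\ forall z, T n z -> le lt m z /\ le lt z M)
  (Hcompact : order_compact lt)
  (Hdense : forall x y, lt x y ->
      hits lt (fun z => exists n, (1 <= n)%nat /\ T n z) x y) :
  (exists d, d_spec lt T d) /\
  (forall d, d_spec lt T d ->
     is_metric d /\ reznichenko lt d /\ fragments lt d).
Proof.
  destruct Hlin as [Hirr [Htr Htri]].
  assert (Hasym : forall x y, lt x y -> ~ lt y x).
  { intros x y h1 h2; exact (Hirr x (Htr _ _ _ h1 h2)). }
  assert (ltle : forall x y z, lt x y -> le lt y z -> lt x z).
  { intros x y z h [h'|h']; [eauto|subst; auto]. }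
  assert (lelt : forall x y z, le lt x y -> lt y z -> lt x z).
  { intros x y z [h|h] h'; [eauto|subst; auto]. }
  assert (lele : forall x y z, le lt x y -> le lt y z -> le lt x z).
  { intros x y z [h|h] h'; [left; eauto|subst; auto]. }
  assert (Tsub : forall k j, (1 <= k)%nat -> (k <= j)%nat -> forall z, T k z -> T j z).
  { intros k j; induction j; intros hk hkj z Tz; [lia|].
    destruct (Nat.eq_dec k (S j)); [subst; auto|].
    apply Hmono; [lia|]. apply IHj; auto; lia. }
  split.
  -
    pose (nsel := fun x y => match excluded_middle_informative
                   (exists n, least_hit lt T x y n) with
                 | left H => proj1_sig (constructive_indefinite_description _ H)
                 | right _ => 0%nat end).
    assert (Hnsel : forall x y, lt x y -> least_hit lt T x y (nsel x y)).
    { intros x y h. unfold nsel.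
      destruct (excluded_middle_informative (exists n, least_hit lt T x y n)) as [H|H].
      - destruct (constructive_indefinite_description _ H); simpl; auto.
      - exfalso; apply H.
        destruct (Hdense x y h) as [z [[k [hk Tz]] [xz zy]]].
        destruct (least_nat (fun n => (1 <= n)%nat /\ hits lt (T n) x y)) as [n [[hn1 hn2] hn3]].
        + exists k; split; auto; exists z; auto.
        + exists n; split; [auto|split; auto]. }
    exists (fun x y => if excluded_middle_informative (lt x y) then / INR (nsel x y)
               else if excluded_middle_informative (lt y x) then / INR (nsel y x) else 0).
    split.
    + intros x. destruct (excluded_middle_informative (lt x x)) as [h|h];
        [exfalso; eapply Hirr; eauto|reflexivity].
    + intros x y h. exists (nsel x y). split; [auto|].
      destruct (excluded_middle_informative (lt x y)) as [h1|h1]; [|contradiction].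
      destruct (excluded_middle_informative (lt y x)) as [h2|h2];
        [exfalso; eapply Hasym; eauto|].
      split; reflexivity.
  - intros d [Hd0 Hd].
    assert (Hsym : forall x y, d x y = d y x).
    { intros x y; destruct (Htri x y) as [h|[h|h]].
      - destruct (Hd x y h) as [n [_ [e1 e2]]]; lra.
      - subst; reflexivity.
      - destruct (Hd y x h) as [n [_ [e1 e2]]]; lra. }
    assert (Hlow : forall u v k, lt u v -> (1 <= k)%nat -> hits lt (T k) u v ->
                     / INR k <= d u v).
    { intros u v k h hk hh. destruct (Hd u v h) as [n [[hn1 [_ hmin]] [e _]]].
      rewrite e. specialize (hmin k hk hh).
      apply Rinv_le_contravar; [apply lt_0_INR; lia|apply le_INR; auto]. }
    assert (Hpos : forall x y, lt x y -> 0 < d x y).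
    { intros x y h. destruct (Hd x y h) as [n [[hn1 _] [e _]]]. rewrite e.
      apply Rinv_0_lt_compat, lt_0_INR; lia. }
    assert (Hnn : forall x y, 0 <= d x y).
    { intros x y; destruct (Htri x y) as [h|[h|h]].
      - left; auto.
      - subst; rewrite Hd0; lra.
      - rewrite Hsym; left; auto. }
    assert (Hmon : forall a b a' b', lt a' b' -> le lt a a' -> le lt b' b -> d a' b' <= d a b).
    { intros a b a' b' h ha hb.
      destruct (Hd a' b' h) as [n [[hn1 [[z [Tz [az zb]]] _]] [e _]]].
      rewrite e. apply Hlow; auto.
      - apply (lelt _ a'); auto. apply (ltle _ z); auto. eapply lele; eauto.
      - exists z; split; [auto|split]; [eapply lelt; eauto|eapply lele; eauto]. }
    assert (Hkey : forall a b c, lt a b -> lt b c -> d a c <= d a b \/ d a c <= d b c).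
    { intros a b c hab hbc.
      destruct (Hd a c (Htr _ _ _ hab hbc)) as [n [[hn1 [[z [Tz [az zc]]] _]] [e _]]].
      rewrite e. destruct (Htri z b) as [h|[h|h]].
      - left; apply Hlow; auto. exists z; split; auto; split; auto; left; auto.
      - left; apply Hlow; auto. exists z; split; auto; split; auto; right; auto.
      - right; apply Hlow; auto. exists z; auto. }
    assert (Htri1 : forall x y z, lt x z -> d x z <= d x y + d y z).
    { intros x y z hxz. destruct (Htri y x) as [h|[h|h]].
      - assert (d x z <= d y z) by (apply Hmon; auto; [left; auto|right; auto]).
        pose proof (Hnn x y); lra.
      - subst. rewrite Hd0; lra.
      - destruct (Htri y z) as [h'|[h'|h']].
        + destruct (Hkey x y z h h'); pose proof (Hnn x y); pose proof (Hnn y z); lra.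
        + subst. rewrite Hd0; lra.
        + assert (d x z <= d x y) by (apply Hmon; auto; [right; auto|left; auto]).
          pose proof (Hnn y z); lra. }
    split; [|split].
    +
      split; [auto|split; [|split; [auto|]]].
      * intros x y; split; [|intros; subst; auto].
        intros e. destruct (Htri x y) as [h|[h|h]]; auto.
        -- specialize (Hpos x y h); lra.
        -- rewrite Hsym in e; specialize (Hpos y x h); lra.
      * intros x y z. destruct (Htri x z) as [h|[h|h]].
        -- auto.
        -- subst. rewrite Hd0. pose proof (Hnn z y); pose proof (Hnn y z); lra.
        -- rewrite (Hsym x z), (Hsym x y), (Hsym y z). specialize (Htri1 z y x h); lra.
    +
      assert (R1 : forall x y, lt x y -> exists U V, order_open lt U /\ order_open lt V /\
                U x /\ V y /\ exists eps, 0 < eps /\ forall u v, U u -> V v -> eps <= d u v).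
      { intros x y hxy.
        destruct (classic (exists w, lt x w /\ lt w y)) as [[w [h1 h2]]|hn].
        - destruct (Hdense x w h1) as [z [[k [hk Tz]] [xz zw]]].
          exists (ointerval Tb lt None (Some z)), (ointerval Tb lt (Some z) None).
          split; [apply oi_open|split; [apply oi_open|]].
          split; [simpl; split; auto|split; [simpl; split; auto; eapply lelt; eauto|]].
          exists (/ INR k); split; [apply Rinv_0_lt_compat, lt_0_INR; lia|].
          intros u v [_ hu] [hv _]. apply Hlow; auto; [eauto|].
          exists z; split; auto; split; auto; left; auto.
        - destruct (Hdense x y hxy) as [z [[k [hk Tz]] [xz zy]]].
          exists (ointerval Tb lt None (Some y)), (ointerval Tb lt (Some x) None).
          split; [apply oi_open|split; [apply oi_open|]].
          split; [simpl; split; auto|split; [simpl; split; auto|]].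
          exists (/ INR k); split; [apply Rinv_0_lt_compat, lt_0_INR; lia|].
          intros u v [_ hu] [hv _].
          assert (hux : le lt u x).
          { destruct (Htri u x) as [h|[h|h]]; [left; auto|right; auto|].
            exfalso; apply hn; exists u; auto. }
          assert (hvy : le lt y v).
          { destruct (Htri v y) as [h|[h|h]]; [|right; auto|left; auto].
            exfalso; apply hn; exists v; auto. }
          assert (uz : lt u z) by (eapply lelt; eauto).
          assert (zv : le lt z v) by (eapply lele; eauto).
          apply Hlow; auto; [eapply ltle; eauto|].
          exists z; auto. }
      intros x y hxy. destruct (Htri x y) as [h|[h|h]]; [auto|contradiction|].
      destruct (R1 y x h) as [U [V [oU [oV [Uy [Vx [eps [he hb]]]]]]]].
      exists V, U; do 4 (split; auto). exists eps; split; auto.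
      intros u v hv hu; rewrite Hsym; auto.
    +
      intros L HL [l0 Hl0] eps Heps.
      destruct (INR_archimed eps 1 Heps) as [n0 hn0].
      set (N := S n0).
      assert (hN : (1 <= N)%nat) by (unfold N; lia).
      assert (hNe : / INR (S N) < eps).
      { assert (INR n0 <= INR (S N)) by (apply le_INR; unfold N; lia).
        assert (hp : 0 < INR (S N)) by (apply lt_0_INR; lia).
        assert (INR (S N) * eps > 1) by nra.
        apply Rmult_lt_reg_l with (INR (S N)); auto.
        rewrite Rinv_r; lra. }
      assert (Hbound : forall x y, lt x y ->
               (forall t, T N t -> lt x t -> le lt t y -> False) -> d x y <= / INR (S N)).
      { intros x y h hno. destruct (Hd x y h) as [n [[hn1 [[z [Tz [xz zy]]] _]] [e _]]].
        rewrite e. destruct (le_lt_dec n N) as [hle|hlt].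
        - exfalso; apply (hno z); auto. apply (Tsub n); auto.
        - apply Rinv_le_contravar; [apply lt_0_INR; lia|apply le_INR; lia]. }
      assert (HO : exists O, order_open lt O /\ (exists x, L x /\ O x) /\
                forall x y t, L x -> O x -> L y -> O y -> lt x y -> T N t -> lt x t ->
                  le lt t y -> False).
      { destruct (classic (exists t, T N t /\ exists l, L l /\ lt l t)) as [H|H].
        - destruct (Hwo N hN (fun t => T N t /\ exists l, L l /\ lt l t)
                      (fun z h => proj1 h) H) as [a [[Ta [l [Ll la]]] amin]].
          exists (ointerval Tb lt None (Some a)). split; [apply oi_open|split].
          + exists l; split; auto; simpl; split; auto.
          + intros x y t Lx [_ xa] Ly [_ ya] xy Tt xt ty.
            assert (le lt a t) by (apply amin; split; auto; exists x; auto).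
            assert (lt a a) by (eapply lelt; [eapply lele; eauto|]; eauto).
            eapply Hirr; eauto.
        - exists (ointerval Tb lt None None). split; [apply oi_open|split].
          + exists l0; split; auto; simpl; split; auto.
          + intros x y t Lx _ Ly _ xy Tt xt ty. apply H; exists t; split; auto.
            exists x; auto. }
      destruct HO as [O [oO [[x0 [Lx0 Ox0]] Hno]]].
      exists (fun x => L x /\ O x). split.
      { exists O; split; auto; intros; tauto. }
      split; [exists x0; auto|].
      exists (/ INR (S N)); split; auto.
      intros x y [Lx Ox] [Ly Oy]. destruct (Htri x y) as [h|[h|h]].
      * apply Hbound; auto. intros t; eapply Hno; eauto.
      * subst. rewrite Hd0. left; apply Rinv_0_lt_compat, lt_0_INR; lia.
      * rewrite Hsym. apply Hbound; auto. intros t; eapply Hno; eauto.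
Qed.
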